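(* Let $f:[0,\infty)\to\mathbb{R}$ be convex with $f(1)=0$ and $G$ an increasing convex function with $G(0)=0$ such that $(G,f)$ is information-subadditive. Consider a message set $\mathcal{M}=\{1,\dots,|\mathcal{M}|\}$ with $|\mathcal{M}|\ge2$ and message $M$ uniform on $\mathcal{M}$, an encoder mapping each $m$ to a codeword $X^n(m)\in\mathcal{X}^n$, a memoryless channel $p_{Y^n|X^n}(y^n|x^n)=\prod_{i=1}^n W_{Y|X}(y_i|x_i)$ on finite alphabets, and a decoder mapping $Y^n$ to an estimate $\hat M\in\mathcal{M}$, with average error probability $\Pr(M\ne\hat M)=\epsilon$. Then $$n\ge \frac{G\!\left(\frac{1}{|\mathcal{M}|}f(|\mathcal{M}|(1-\epsilon))+\frac{|\mathcal{M}|-1}{|\mathcal{M}|}f\!\left(\frac{|\mathcal{M}|\epsilon}{|\mathcal{M}|-1}\right)\right)}{\max_{p_X} I_{G,f}(X;Y)},$$ where in the denominator $Y$ is the output of $W_{Y|X}$ with input $X\sim p_X$.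
   Context: For distributions $p\ll q$ on a finite set, $D_f(p\|q)=\sum_x q(x) f(p(x)/q(x))$ with $0f(0/0)=0$. For random variables $X,Y$ on finite sets, $I_{G,f}(X;Y)=\min_{q_Y}\sum_x p_X(x)\,G(D_f(p_{Y|X=x}\|q_Y))$. $(G,f)$ is information-subadditive if for all random variables $X,Y,Z$ on finite sets with $p_{XYZ}=p_Xp_{Y|X}p_{Z|X}$, $I_{G,f}(X;YZ)\le I_{G,f}(X;Y)+I_{G,f}(X;Z)$. *)

(* Defs.v *)
From mathcomp Require Import all_boot all_order all_algebra.
From mathcomp Require Import boolp classical_sets reals.
Set Implicit Arguments. Unset Strict Implicit. Unset Printing Implicit Defensive.
Import Order.TTheory GRing.Theory Num.Theory.
Local Open Scope ring_scope.
Local Open Scope classical_set_scope.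

Section Defs.
Variable R : realType.

Definition is_dist (T : finType) (p : T -> R) : Prop :=
  (forall t, 0 <= p t) /\ \sum_(t : T) p t = 1.

Definition is_channel (X Y : finType) (W : X -> Y -> R) : Prop :=
  forall x, is_dist (W x).

Definition abs_cont (T : finType) (p q : T -> R) : Prop :=
  forall t, q t = 0 -> p t = 0.

(* D_f(p||q) = sum_x q(x) f(p(x)/q(x)); terms with q(x)=0 (hence p(x)=0
   when p << q) contribute 0, matching the convention 0 f(0/0) = 0. *)
Definition Df (f : R -> R) (T : finType) (p q : T -> R) : R :=
  \sum_(t : T) q t * f (p t / q t).

(* I_{G,f}(X;Y) for X ~ pX and p_{Y|X} = W:
   inf over distributions q_Y (with p_{Y|X=x} << q_Y for every x in the
   support of pX, so that all divergences are defined) of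
   sum_x pX(x) G(D_f(p_{Y|X=x} || q_Y)). *)
Definition IGf (G f : R -> R) (X Y : finType) (pX : X -> R) (W : X -> Y -> R)
  : R :=
  inf [set r | exists q : Y -> R,
         [/\ is_dist q,
             (forall x, 0 < pX x -> abs_cont (W x) q) &
             r = \sum_(x : X) pX x * G (Df f (W x) q)]].

Definition prod_channel (X Y Z : finType) (W1 : X -> Y -> R) (W2 : X -> Z -> R)
  : X -> (Y * Z)%type -> R :=
  fun x yz => W1 x yz.1 * W2 x yz.2.

Definition info_subadditive (G f : R -> R) : Prop :=
  forall (X Y Z : finType) (pX : X -> R) (W1 : X -> Y -> R) (W2 : X -> Z -> R),
    is_dist pX -> is_channel W1 -> is_channel W2 ->
    IGf G f pX (prod_channel W1 W2) <= IGf G f pX W1 + IGf G f pX W2.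

Definition capacity (G f : R -> R) (X Y : finType) (W : X -> Y -> R) : R :=
  sup [set r | exists pX : X -> R, is_dist pX /\ r = IGf G f pX W].

Definition convex_on_nonneg (f : R -> R) : Prop :=
  forall x y t, 0 <= x -> 0 <= y -> 0 <= t <= 1 ->
    f (t * x + (1 - t) * y) <= t * f x + (1 - t) * f y.

Definition nondecr_on_nonneg (G : R -> R) : Prop :=
  forall x y, 0 <= x -> x <= y -> G x <= G y.

Definition mem_channel (X Y : finType) (W : X -> Y -> R) (n : nat)
  (xn : {ffun 'I_n -> X}) (yn : {ffun 'I_n -> Y}) : R :=
  \prod_(i < n) W (xn i) (yn i).

Definition avg_error (X Y : finType) (W : X -> Y -> R) (n Msz : nat)
  (enc : 'I_Msz -> {ffun 'I_n -> X}) (dec : {ffun 'I_n -> Y} -> 'I_Msz) : R :=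
  \sum_(m < Msz) Msz%:R^-1 *
    \sum_(yn : {ffun 'I_n -> Y} | dec yn != m) mem_channel W (enc m) yn.

End Defs.

(* Main.v *)
Require Import Defs.
From mathcomp Require Import all_boot all_order all_algebra.
From mathcomp Require Import boolp classical_sets reals.
From mathcomp Require Import ring lra.
Import Order.TTheory GRing.Theory Num.Theory.
Local Open Scope ring_scope.


Lemma two_point (R : realType) (f : R -> R) (hf : convex_on_nonneg f) (P1 Q1 P2 Q2 : R) :
  0 <= P1 -> 0 <= Q1 -> 0 <= P2 -> 0 <= Q2 ->
  (Q1 = 0 -> P1 = 0) -> (Q2 = 0 -> P2 = 0) ->
  (Q1 + Q2) * f ((P1 + P2) / (Q1 + Q2)) <= Q1 * f (P1 / Q1) + Q2 * f (P2 / Q2).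
Proof.
move=> hP1 hQ1 hP2 hQ2 a1 a2.
have [e|nQ1] := eqVneq Q1 0; first by rewrite e (a1 e) mul0r !add0r.
have [e|nQ2] := eqVneq Q2 0; first by rewrite e (a2 e) mul0r !addr0.
have pQ1 : 0 < Q1 by rewrite lt_def nQ1.
have pQ2 : 0 < Q2 by rewrite lt_def nQ2.
have pS : 0 < Q1 + Q2 by rewrite addr_gt0.
set t := Q1 / (Q1 + Q2).
have ht : 0 <= t <= 1.
  apply/andP; split; first by rewrite divr_ge0 // ltW.
  by rewrite ler_pdivrMr // mul1r lerDl ltW.
have e1 : 1 - t = Q2 / (Q1 + Q2).
  rewrite /t; field; by rewrite gt_eqF.
have := hf (P1 / Q1) (P2 / Q2) t (divr_ge0 hP1 hQ1) (divr_ge0 hP2 hQ2) ht.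
have -> : t * (P1 / Q1) + (1 - t) * (P2 / Q2) = (P1 + P2) / (Q1 + Q2).
  rewrite e1 /t; field; rewrite !gt_eqF //.
move=> H; rewrite -(ler_pM2l pS) in H; apply: (le_trans H).
rewrite mulrDr e1 /t !mulrA.
by rewrite !(mulrC (Q1 + Q2)) !mulfK ?gt_eqF.
Qed.

Lemma sum0_abs (R : realType) (I : Type) (s : seq I) (P : pred I) (p q : I -> R) :
  (forall i, P i -> 0 <= q i) -> (forall i, P i -> q i = 0 -> p i = 0) ->
  \sum_(i <- s | P i) q i = 0 -> \sum_(i <- s | P i) p i = 0.
Proof.
move=> hq ha; elim: s => [|x s IH]; first by rewrite !big_nil.
rewrite !big_cons; case: ifP => Px // H.
have hx : 0 <= q x by apply: hq.
have hs : 0 <= \sum_(i <- s | P i) q i by apply: sumr_ge0.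
have q0 : q x = 0 by lra.
rewrite q0 add0r in H; by rewrite IH // (ha x Px q0) add0r.
Qed.

Lemma logsum (R : realType) (f : R -> R) (hf : convex_on_nonneg f) (I : Type) (s : seq I) (P : pred I)
  (p q : I -> R) :
  (forall i, P i -> 0 <= p i) -> (forall i, P i -> 0 <= q i) ->
  (forall i, P i -> q i = 0 -> p i = 0) ->
  (\sum_(i <- s | P i) q i) * f ((\sum_(i <- s | P i) p i) / \sum_(i <- s | P i) q i)
  <= \sum_(i <- s | P i) q i * f (p i / q i).
Proof.
move=> hp hq ha; elim: s => [|x s IH]; first by rewrite !big_nil mul0r.
rewrite !big_cons; case: ifP => Px //.
have hs1 : 0 <= \sum_(i <- s | P i) p i by apply: sumr_ge0.
have hs2 : 0 <= \sum_(i <- s | P i) q i by apply: sumr_ge0.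
have hs3 := @sum0_abs R _ s P p q hq ha.
have T := (@two_point R f hf _ _ _ _ (hp x Px) (hq x Px) hs1 hs2 (ha x Px) hs3).
apply: (le_trans T); by rewrite lerD2l.
Qed.


Set Implicit Arguments. Unset Strict Implicit. Unset Printing Implicit Defensive.

Definition Iset (R : realType) (G f : R -> R) (X Y : finType) (pX : X -> R)
  (W : X -> Y -> R) : set R :=
  [set r | exists q : Y -> R,
         [/\ is_dist q,
             (forall x, 0 < pX x -> abs_cont (W x) q) &
             r = \sum_(x : X) pX x * G (Df f (W x) q)]].

Lemma IGfE (R : realType) (G f : R -> R) (X Y : finType) (pX : X -> R)
  (W : X -> Y -> R) : IGf G f pX W = inf (Iset G f pX W).
Proof. by []. Qed.

Lemma Df_ge0 (R : realType) (f : R -> R) (hf : convex_on_nonneg f) (hf1 : f 1 = 0)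
  (T : finType) (p q : T -> R) :
  is_dist p -> is_dist q -> abs_cont p q -> 0 <= Df f p q.
Proof.
move=> [hp sp] [hq sq] ha.
have := @logsum R f hf T (index_enum T) predT p q (fun i _ => hp i) (fun i _ => hq i)
  (fun i _ => ha i).
by rewrite /Df sp sq divr1 hf1 mulr0.
Qed.

Lemma Iset_lb (R : realType) (G f : R -> R) (hf : convex_on_nonneg f) (hf1 : f 1 = 0)
  (hGmono : nondecr_on_nonneg G) (hG0 : G 0 = 0)
  (X Y : finType) (pX : X -> R) (W : X -> Y -> R) :
  is_dist pX -> is_channel W -> lbound (Iset G f pX W) 0.
Proof.
move=> [pX0 _] hW r [q [hq ha ->]]; apply: sumr_ge0 => x _.
have := pX0 x; rewrite le_eqVlt => /orP[/eqP <-|px]; first by rewrite mul0r.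
apply: mulr_ge0; first exact: ltW.
rewrite -hG0; apply: hGmono => //; exact: Df_ge0 (hW x) hq (ha x px).
Qed.

Lemma IGf_le_val (R : realType) (G f : R -> R) (hf : convex_on_nonneg f) (hf1 : f 1 = 0)
  (hGmono : nondecr_on_nonneg G) (hG0 : G 0 = 0)
  (X Y : finType) (pX : X -> R) (W : X -> Y -> R) (q : Y -> R) :
  is_dist pX -> is_channel W -> is_dist q -> (forall x, 0 < pX x -> abs_cont (W x) q) ->
  IGf G f pX W <= \sum_(x : X) pX x * G (Df f (W x) q).
Proof.
move=> hpX hW hq ha; rewrite IGfE; apply: ge_inf.
  by exists 0; apply: Iset_lb.
by exists q; split.
Qed.

Lemma IGf_ge (R : realType) (G f : R -> R) (X Y : finType) (pX : X -> R)
  (W : X -> Y -> R) (c : R) (q0 : Y -> R) :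
  is_dist q0 -> (forall x, 0 < pX x -> abs_cont (W x) q0) ->
  (forall q : Y -> R, is_dist q -> (forall x, 0 < pX x -> abs_cont (W x) q) ->
     c <= \sum_(x : X) pX x * G (Df f (W x) q)) ->
  c <= IGf G f pX W.
Proof.
move=> hq0 ha0 H; rewrite IGfE; apply: lb_le_inf.
  by exists (\sum_(x : X) pX x * G (Df f (W x) q0)); exists q0; split.
by move=> r [q [hq ha ->]]; apply: H.
Qed.

Lemma sum_bij (R : realType) (Y1 Y2 : finType) (phi : Y2 -> Y1) (psi : Y1 -> Y2)
  (c1 : cancel phi psi) (c2 : cancel psi phi) (F : Y2 -> R) :
  \sum_(y2 : Y2) F y2 = \sum_(y1 : Y1) F (psi y1).
Proof.
rewrite (reindex psi) //; apply: onW_bij; by exists phi.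
Qed.

Lemma IGf_bij (R : realType) (G f : R -> R) (X Y1 Y2 : finType) (pX : X -> R)
  (W1 : X -> Y1 -> R) (phi : Y2 -> Y1) (psi : Y1 -> Y2) :
  cancel phi psi -> cancel psi phi ->
  IGf G f pX (fun x y => W1 x (phi y)) = IGf G f pX W1.
Proof.
move=> c1 c2; rewrite !IGfE; congr inf; apply/seteqP; split => r [q [[hq sq] ha ->]].
- exists (fun y1 => q (psi y1)); split.
  + split => // ; by rewrite -(sum_bij c1 c2).
  + move=> x px y1 /= e; have := ha x px (psi y1) e; by rewrite c2.
  + apply: eq_bigr => x _; congr (_ * G _); rewrite /Df (sum_bij c1 c2).
    by apply: eq_bigr => y1 _; rewrite c2.
- exists (fun y2 => q (phi y2)); split.
  + split => // ; rewrite (sum_bij c1 c2); under eq_bigr => y _ do rewrite c2; exact: sq.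
  + move=> x px y2 /= e; exact: ha x px (phi y2) e.
  + apply: eq_bigr => x _; congr (_ * G _); rewrite /Df (sum_bij c1 c2).
    by apply: eq_bigr => y1 _; rewrite c2.
Qed.

Definition prodCh (R : realType) (X Y : finType) (k : nat) (Ch : 'I_k -> X -> Y -> R) :
  X -> {ffun 'I_k -> Y} -> R :=
  fun x yn => \prod_(i < k) Ch i x (yn i).

Lemma prodCh_channel (R : realType) (X Y : finType) (k : nat) (Ch : 'I_k -> X -> Y -> R) :
  (forall i, is_channel (Ch i)) -> is_channel (prodCh Ch).
Proof.
move=> hC x; split.
  by move=> yn; apply: prodr_ge0 => i _; case: (hC i x).
rewrite /prodCh -(bigA_distr_bigA (fun i y => Ch i x y)) /=.
by apply: big1 => i _; case: (hC i x).
Qed.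

Definition phiS (Y : finType) (k : nat) (yn : {ffun 'I_k.+1 -> Y}) :
  (Y * {ffun 'I_k -> Y})%type := (yn ord0, [ffun i => yn (lift ord0 i)]).

Definition psiS (Y : finType) (k : nat) (p : (Y * {ffun 'I_k -> Y})%type) :
  {ffun 'I_k.+1 -> Y} :=
  [ffun i => if unlift ord0 i is Some j then p.2 j else p.1].

Lemma phiSK (Y : finType) (k : nat) : cancel (@phiS Y k) (@psiS Y k).
Proof.
move=> yn; apply/ffunP => i; rewrite ffunE /phiS /=.
by case: (unliftP ord0 i) => [j ->|->]; rewrite ?ffunE.
Qed.

Lemma psiSK (Y : finType) (k : nat) : cancel (@psiS Y k) (@phiS Y k).
Proof.
case=> y yn; rewrite /phiS /psiS ffunE unlift_none; congr pair.
by apply/ffunP => i; rewrite !ffunE liftK.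
Qed.

Lemma prodCh_le (R : realType) (G f : R -> R) (hf : convex_on_nonneg f) (hf1 : f 1 = 0)
  (hGmono : nondecr_on_nonneg G) (hG0 : G 0 = 0) (hsub : info_subadditive G f)
  (X Y : finType) (pX : X -> R) (hpX : is_dist pX) (c : R) (k : nat) :
  forall (Ch : 'I_k -> X -> Y -> R), (forall i, is_channel (Ch i)) ->
  (forall i, IGf G f pX (Ch i) <= c) -> IGf G f pX (prodCh Ch) <= k%:R * c.
Proof.
elim: k => [|k IH] Ch hC hI.
  rewrite mul0r.
  have hq : is_dist (fun _ : {ffun 'I_0 -> Y} => (1 : R)).
    split => // ; by rewrite sumr_const card_ffun card_ord expn0.
  apply: le_trans (IGf_le_val hf hf1 hGmono hG0 hpX (prodCh_channel hC) hq _) _.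
    by move=> x _ t /= e; move: (@oner_neq0 R); rewrite e eqxx.
  rewrite big1 // => x _; rewrite /Df big1 ?hG0 ?mulr0 // => yn _.
  by rewrite /prodCh big_ord0 divr1 hf1 mulr0.
pose Ch' := fun (i : 'I_k) => Ch (lift ord0 i).
have -> : prodCh Ch = (fun x yn => prod_channel (Ch ord0) (prodCh Ch') x (@phiS Y k yn)).
  apply: funext => x; apply: funext => yn.
  by rewrite /prodCh /prod_channel big_ord_recl /phiS /=; under [in RHS]eq_bigr => i _ do rewrite ffunE.
rewrite (@IGf_bij R G f X _ _ pX _ _ _ (@phiSK Y k) (@psiSK Y k)).
have hC' : forall i, is_channel (Ch' i) by move=> i; apply: hC.
apply: le_trans (hsub _ _ _ pX _ _ hpX (hC ord0) (prodCh_channel hC')) _.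
rewrite -natr1 mulrDl mul1r [X in _ <= X]addrC; apply: lerD; first exact: hI.
by apply: IH => // i; apply: hI.
Qed.

Lemma push_sum (R : realType) (Xin Xout : finType) (e : Xin -> Xout) (F : Xin -> R) :
  \sum_(x : Xout) \sum_(m | e m == x) F m = \sum_(m : Xin) F m.
Proof. by rewrite (partition_big e predT). Qed.

Definition push (R : realType) (Xin Xout : finType) (pM : Xin -> R) (e : Xin -> Xout) :
  Xout -> R := fun x => \sum_(m | e m == x) pM m.

Lemma push_dist (R : realType) (Xin Xout : finType) (pM : Xin -> R) (e : Xin -> Xout) :
  is_dist pM -> is_dist (push pM e).
Proof.
move=> [h0 h1]; split; first by move=> x; apply: sumr_ge0.
by rewrite /push push_sum.
Qed.

Lemma IGf_push (R : realType) (G f : R -> R) (Xin Xout Y : finType) (pM : Xin -> R)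
  (e : Xin -> Xout) (W : Xout -> Y -> R) :
  (forall m, 0 <= pM m) ->
  IGf G f pM (fun m => W (e m)) = IGf G f (push pM e) W.
Proof.
move=> h0; rewrite !IGfE; congr inf; apply/seteqP; split => r [q [hq ha ->]];
  exists q; split => //.
- move=> x px.
  case E: [exists m, (e m == x) && (0 < pM m)].
    by case/existsP: E => m /andP[/eqP <- pm]; apply: ha.
  suff : push pM e x = 0 by move=> z; rewrite z ltxx in px.
  rewrite /push big1 // => m em.
  move/negbT/existsPn: E => /(_ m); rewrite em /= => /negP hm.
  by apply/eqP; rewrite eq_le h0 andbT leNgt; apply/negP.
- rewrite -(push_sum e) /push; apply: eq_bigr => x _; rewrite mulr_suml.
  by apply: eq_bigr => m /eqP <-.
- move=> m pm; apply: ha; apply: (lt_le_trans pm).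
  rewrite /push (bigD1 m) //= lerDl; exact: sumr_ge0.
- rewrite -(push_sum e) /push; apply: eq_bigr => x _; rewrite mulr_suml.
  by apply: eq_bigr => m /eqP <-.
Qed.

Lemma cap_ub (R : realType) (G f : R -> R) (hf : convex_on_nonneg f) (hf1 : f 1 = 0)
  (hGmono : nondecr_on_nonneg G) (hG0 : G 0 = 0)
  (X Y : finType) (W : X -> Y -> R) (hW : is_channel W) (pX : X -> R) :
  is_dist pX -> IGf G f pX W <= capacity G f W.
Proof.
move=> hpX; apply: ub_le_sup; last by exists pX.
pose q0 := fun _ : Y => (#|Y|%:R : R)^-1.
exists (\sum_(x : X) G (Df f (W x) q0)) => r [pX' [[h0 h1] ->]].
have [x0 _] : exists x : X, true.
  case: (pickP (fun _ : X => true)) => [x _|h]; first by exists x.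
  have : \sum_x pX' x = 0 by apply: big1 => x _; have := h x.
  by rewrite h1 => /eqP; rewrite oner_eq0.
have Yne : (0 < #|Y|)%N.
  rewrite lt0n; apply/negP => /eqP /card0_eq h.
  have [_ s1] := hW x0; move: s1; rewrite big_pred0 // => e.
  by move: (@oner_neq0 R); rewrite -e eqxx.
have hq0 : is_dist q0.
  split; first by move=> y; rewrite invr_ge0 ler0n.
  by rewrite sumr_const (_ : #|xpredT| = #|Y|) // -(mulr_natr ((#|Y|%:R : R)^-1)) mulVf // pnatr_eq0 -lt0n.
have ha0 : forall x, abs_cont (W x) q0.
  move=> x y; rewrite /q0 => /eqP; rewrite invr_eq0 pnatr_eq0 => /eqP e.
  by move: Yne; rewrite e.
apply: le_trans (IGf_le_val hf hf1 hGmono hG0 (conj h0 h1) hW hq0 (fun x _ => ha0 x)) _.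
apply: ler_sum => x _.
have GD : 0 <= G (Df f (W x) q0).
  rewrite -hG0; apply: hGmono => //; exact: Df_ge0 (hW x) hq0 (ha0 x).
rewrite -{2}(mul1r (G _)); apply: ler_wpM2r => //.
by rewrite -h1 (bigD1 x) //= lerDl; apply: sumr_ge0.
Qed.

Unset Implicit Arguments.

Theorem theorem5 (R : realType) (f G : R -> R)
  (hf : convex_on_nonneg f) (hf1 : f 1 = 0)
  (hGmono : nondecr_on_nonneg G) (hGconv : convex_on_nonneg G) (hG0 : G 0 = 0)
  (hsub : info_subadditive G f)
  (X Y : finType) (W : X -> Y -> R) (hW : is_channel W)
  (n Msz : nat) (hM : (2 <= Msz)%N)
  (enc : 'I_Msz -> {ffun 'I_n -> X}) (dec : {ffun 'I_n -> Y} -> 'I_Msz)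
  (eps : R) (heps : avg_error W enc dec = eps) :
  G (Msz%:R^-1 * f (Msz%:R * (1 - eps))
     + (Msz%:R - 1) / Msz%:R * f (Msz%:R * eps / (Msz%:R - 1)))
    / capacity G f W
  <= n%:R.
Proof.
have M0 : (0 < Msz%:R :> R) by rewrite ltr0n; apply: leq_trans hM.
have M1 : (0 < Msz%:R - 1 :> R) by rewrite subr_gt0 ltr1n.
pose pM := fun _ : 'I_Msz => (Msz%:R : R)^-1.
have pMp : forall m, 0 < pM m by move=> m; rewrite invr_gt0.
have hpM : is_dist pM.
  split; first by move=> m; exact: ltW.
  by rewrite sumr_const card_ord -(mulr_natr ((Msz%:R : R)^-1)) mulVf // gt_eqF.
pose V := fun m yn => mem_channel W (enc m) yn.
pose Ch := fun (i : 'I_n) (m : 'I_Msz) (y : Y) => W (enc m i) y.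
have VE : V = prodCh Ch by [].
have hV : is_channel V by rewrite VE; apply: prodCh_channel => i m; apply: hW.
have Hup : IGf G f pM V <= n%:R * capacity G f W.
  rewrite VE; apply: prodCh_le => //; first by move=> i m; apply: hW.
  move=> i.
  have -> : IGf G f pM (Ch i) = IGf G f (push pM (fun m => enc m i)) W.
    by apply: IGf_push => m; apply: ltW.
  by apply: cap_ub => //; apply: push_dist.
have V0 : forall m yn, 0 <= V m yn by move=> m yn; case: (hV m).
have Vs : forall m, \sum_(yn | dec yn == m) V m yn + \sum_(yn | dec yn != m) V m yn = 1.
  by move=> m; case: (hV m) => _ <-; rewrite [RHS](bigID (fun yn => dec yn == m)).
have heps' : eps = Msz%:R^-1 * \sum_m \sum_(yn | dec yn != m) V m yn.
  by rewrite -heps /avg_error mulr_sumr.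
have a'1 : forall m, \sum_(yn | dec yn != m) V m yn <= 1.
  move=> m; rewrite -(Vs m) lerDr; exact: sumr_ge0.
have e0 : 0 <= eps.
  rewrite heps'; apply: mulr_ge0; first by rewrite invr_ge0 ltW.
  by apply: sumr_ge0 => m _; apply: sumr_ge0.
have e1 : eps <= 1.
  rewrite heps' mulrC ler_pdivrMr // mul1r.
  apply: le_trans (ler_sum _ (fun m _ => a'1 m)) _.
  by rewrite sumr_const card_ord.
set A := (Msz%:R^-1 * _ + _).
have A0 : 0 <= A.
  have Q1n : (Msz%:R : R)^-1 = 0 -> 1 - eps = 0.
    by move=> /eqP; rewrite invr_eq0 gt_eqF.
  have Q2n : (Msz%:R - 1) / (Msz%:R : R) = 0 -> eps = 0.
    by move=> /eqP; rewrite mulf_eq0 invr_eq0 !gt_eqF.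
  have h1 : 0 <= 1 - eps by rewrite subr_ge0.
  have h2 : 0 <= (Msz%:R : R)^-1 by rewrite invr_ge0 ltW.
  have h3 : 0 <= (Msz%:R - 1) / (Msz%:R : R) by rewrite divr_ge0 // ltW.
  have T := @two_point R f hf (1 - eps) (Msz%:R^-1) eps ((Msz%:R - 1) / Msz%:R)
    h1 h2 e0 h3 Q1n Q2n.
  have E1 : (Msz%:R : R)^-1 + (Msz%:R - 1) / Msz%:R = 1 by field; rewrite gt_eqF.
  have E2 : (1 - eps) / (Msz%:R : R)^-1 = Msz%:R * (1 - eps) by rewrite invrK mulrC.
  have E3 : eps / ((Msz%:R - 1) / (Msz%:R : R)) = Msz%:R * eps / (Msz%:R - 1).
    by field; rewrite !gt_eqF.
  rewrite E1 E2 E3 subrK divr1 hf1 mulr0 in T; exact: T.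
have Hlow : G A <= IGf G f pM V.
  pose qb := fun yn => \sum_m pM m * V m yn.
  have hqb : is_dist qb.
    split; first by move=> yn; apply: sumr_ge0 => m _; apply: mulr_ge0 (ltW (pMp m)) (V0 m yn).
    rewrite /qb exchange_big /=.
    under eq_bigr => m _ do rewrite -mulr_sumr (proj2 (hV m)) mulr1.
    exact: (proj2 hpM).
  apply: (IGf_ge (q0 := qb)) => //.
    move=> m _ yn e.
    have := @psumr_eq0P R _ predT (fun m => pM m * V m yn) (fun m _ => mulr_ge0 (ltW (pMp m)) (V0 m yn)) e m erefl.
    by move=> /eqP; rewrite mulf_eq0 gt_eqF //= => /eqP.
  move=> q hq ha.
  have hab : forall m, abs_cont (V m) q by move=> m; apply: ha.
  have D0 : forall m, 0 <= Df f (V m) q by move=> m; apply: Df_ge0 (hV m) hq (hab m).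
  have J := @logsum R G hGconv 'I_Msz (index_enum _) predT
    (fun m => pM m * Df f (V m) q) pM (fun m _ => mulr_ge0 (ltW (pMp m)) (D0 m))
    (fun m _ => ltW (pMp m)) (fun m _ e => ltac:(by rewrite /= e mul0r)).
  rewrite (proj2 hpM) mul1r divr1 in J.
  have J' : G (\sum_m pM m * Df f (V m) q) <= \sum_m pM m * G (Df f (V m) q).
    apply: (le_trans J); apply: ler_sum => m _; apply: ler_wpM2l; first exact: ltW.
    by rewrite mulrC mulKf // gt_eqF.
  apply: le_trans J'.
  apply: hGmono => //.
  pose a := fun m => \sum_(yn | dec yn == m) V m yn.
  pose a' := fun m => \sum_(yn | dec yn != m) V m yn.
  pose b := fun m => \sum_(yn | dec yn == m) q yn.
  pose b' := fun m => \sum_(yn | dec yn != m) q yn.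
  have q0 : forall yn, 0 <= q yn by case: hq.
  have Dm : forall m, b m * f (a m / b m) + b' m * f (a' m / b' m) <= Df f (V m) q.
    move=> m; rewrite /Df [X in _ <= X](bigID (fun yn => dec yn == m)) /=.
    apply: lerD.
      exact: (@logsum R f hf _ _ (fun yn => dec yn == m) (V m) q (fun i _ => V0 m i) (fun i _ => q0 i) (fun i _ => hab m i)).
    exact: (@logsum R f hf _ _ (fun yn => dec yn != m) (V m) q (fun i _ => V0 m i) (fun i _ => q0 i) (fun i _ => hab m i)).
  have a0 : forall m, 0 <= a m by move=> m; apply: sumr_ge0.
  have a'0 : forall m, 0 <= a' m by move=> m; apply: sumr_ge0.
  have b0 : forall m, 0 <= b m by move=> m; apply: sumr_ge0.
  have b'0 : forall m, 0 <= b' m by move=> m; apply: sumr_ge0.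
  have ab : forall m, b m = 0 -> a m = 0.
    by move=> m; apply: (@sum0_abs R _ _ (fun yn => dec yn == m) (V m) q (fun i _ => q0 i) (fun i _ => hab m i)).
  have ab' : forall m, b' m = 0 -> a' m = 0.
    by move=> m; apply: (@sum0_abs R _ _ (fun yn => dec yn != m) (V m) q (fun i _ => q0 i) (fun i _ => hab m i)).
  have L1 := @logsum R f hf 'I_Msz (index_enum _) predT a b (fun m _ => a0 m) (fun m _ => b0 m) (fun m _ => ab m).
  have L2 := @logsum R f hf 'I_Msz (index_enum _) predT a' b' (fun m _ => a'0 m) (fun m _ => b'0 m) (fun m _ => ab' m).
  have bs : forall m, b m + b' m = 1.
    by move=> m; case: hq => _ <-; rewrite [RHS](bigID (fun yn => dec yn == m)).
  have sb : \sum_m b m = 1 by rewrite /b push_sum; case: hq.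
  have sb' : \sum_m b' m = Msz%:R - 1.
    have -> : \sum_m b' m = \sum_m (1 - b m) by apply: eq_bigr => m _; have := bs m; lra.
    by rewrite sumrB sb sumr_const card_ord.
  have sa' : \sum_m a' m = Msz%:R * eps.
    by rewrite heps' mulrA mulfV ?gt_eqF // mul1r.
  have sa : \sum_m a m = Msz%:R * (1 - eps).
    have -> : \sum_m a m = \sum_m (1 - a' m) by apply: eq_bigr => m _; have := Vs m; rewrite -/(a m) -/(a' m); lra.
    by rewrite sumrB sa' sumr_const card_ord mulrBr mulr1.
  rewrite sb sb' sa sa' mul1r divr1 in L1 L2.
  have -> : A = Msz%:R^-1 * f (Msz%:R * (1 - eps)) + Msz%:R^-1 * ((Msz%:R - 1) * f (Msz%:R * eps / (Msz%:R - 1))).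
    by rewrite /A; ring.
  apply: le_trans (_ : Msz%:R^-1 * (\sum_m (b m * f (a m / b m))) + Msz%:R^-1 * (\sum_m (b' m * f (a' m / b' m))) <= _).
    by apply: lerD; apply: ler_wpM2l => //; rewrite invr_ge0 ltW.
  rewrite -mulrDr -big_split /= mulr_sumr; apply: ler_sum => m _.
  by apply: ler_wpM2l; [rewrite invr_ge0 ltW | apply: Dm].
have GA0 : 0 <= G A by rewrite -hG0; apply: hGmono.
have key : G A <= n%:R * capacity G f W by apply: le_trans Hlow Hup.
case: (lerP (capacity G f W) 0) => hc.
  apply: le_trans (ler0n _ n); by rewrite mulr_ge0_le0 // invr_le0.
by rewrite ler_pdivrMr.
Qed.
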